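(* Let $\mathcal C$ be a semi-abelian arithmetical category and $X,Y\le A$ subobjects of an object $A$. Then $X$ and $Y$ Huq-commute if and only if $X\wedge Y=0$ and both $X$ and $Y$ are normal subobjects of the join $X\vee Y$.
   Context: Semi-abelian category: pointed, Barr-exact, protomodular, with binary coproducts. It is arithmetical if the lattice of equivalence relations on each object is distributive; for semi-abelian categories this is equivalent to the zero object being the only abelian object (object Huq-commuting with itself). Subobjects $X,Y\le A$ Huq-commute if there is $\varphi\colon X\times Y\to A$ with $\varphi\circ(1_X,0)$ and $\varphi\circ(0,1_Y)$ the inclusions. A normal subobject is a kernel; $\wedge,\vee$ are meet and join of subobjects of $A$. *)

(* Defs.v *)
Set Implicit Arguments.
Unset Strict Implicit.

Record Category := {
  ob :> Type;
  hom : ob -> ob -> Type;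
  idm : forall A, hom A A;
  comp : forall A B D, hom B D -> hom A B -> hom A D;
  comp_idl : forall A B (f : hom A B), comp (idm B) f = f;
  comp_idr : forall A B (f : hom A B), comp f (idm A) = f;
  comp_assoc : forall A B D E (f : hom A B) (g : hom B D) (h : hom D E),
      comp h (comp g f) = comp (comp h g) f }.

Arguments hom {c} _ _.
Arguments idm {c} _.
Arguments comp {c A B D} _ _.

Notation "g ∘ f" := (comp g f) (at level 40, left associativity).

Definition isIso {C : Category} {A B : C} (f : hom A B) : Prop :=
  exists g : hom B A, g ∘ f = idm A /\ f ∘ g = idm B.

Definition isMono {C : Category} {A B : C} (f : hom A B) : Prop :=
  forall W (u v : hom W A), f ∘ u = f ∘ v -> u = v.

Definition isInitial {C : Category} (Z : C) : Prop :=
  forall A : C, exists f : hom Z A, forall g : hom Z A, g = f.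

Definition isTerminal {C : Category} (Z : C) : Prop :=
  forall A : C, exists f : hom A Z, forall g : hom A Z, g = f.

Definition isZeroObj {C : Category} (Z : C) : Prop := isInitial Z /\ isTerminal Z.

Definition pointed (C : Category) : Prop := exists Z : C, isZeroObj Z.

Definition isZeroMor {C : Category} {A B : C} (f : hom A B) : Prop :=
  exists Z : C, isZeroObj Z /\ exists (g : hom A Z) (h : hom Z B), f = h ∘ g.

Definition isPullback {C : Category} {X Y Z P : C} (f : hom X Z) (g : hom Y Z)
    (p1 : hom P X) (p2 : hom P Y) : Prop :=
  f ∘ p1 = g ∘ p2 /\
  forall W (u : hom W X) (v : hom W Y), f ∘ u = g ∘ v ->
    exists w : hom W P, (p1 ∘ w = u /\ p2 ∘ w = v) /\
      forall w' : hom W P, p1 ∘ w' = u -> p2 ∘ w' = v -> w' = w.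

Definition has_pullbacks (C : Category) : Prop :=
  forall (X Y Z : C) (f : hom X Z) (g : hom Y Z),
    exists P (p1 : hom P X) (p2 : hom P Y), isPullback f g p1 p2.

Definition isProduct {C : Category} {X Y P : C} (p1 : hom P X) (p2 : hom P Y) : Prop :=
  forall W (u : hom W X) (v : hom W Y),
    exists w : hom W P, (p1 ∘ w = u /\ p2 ∘ w = v) /\
      forall w' : hom W P, p1 ∘ w' = u -> p2 ∘ w' = v -> w' = w.

Definition has_binary_products (C : Category) : Prop :=
  forall X Y : C, exists P (p1 : hom P X) (p2 : hom P Y), isProduct p1 p2.

Definition isCoproduct {C : Category} {X Y S : C} (i1 : hom X S) (i2 : hom Y S) : Prop :=
  forall W (u : hom X W) (v : hom Y W),
    exists w : hom S W, (w ∘ i1 = u /\ w ∘ i2 = v) /\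
      forall w' : hom S W, w' ∘ i1 = u -> w' ∘ i2 = v -> w' = w.

Definition has_binary_coproducts (C : Category) : Prop :=
  forall X Y : C, exists S (i1 : hom X S) (i2 : hom Y S), isCoproduct i1 i2.

Definition isCoequalizer {C : Category} {R X Q : C} (a b : hom R X) (q : hom X Q) : Prop :=
  q ∘ a = q ∘ b /\
  forall W (u : hom X W), u ∘ a = u ∘ b ->
    exists w : hom Q W, w ∘ q = u /\ forall w' : hom Q W, w' ∘ q = u -> w' = w.

Definition isRegularEpi {C : Category} {A B : C} (e : hom A B) : Prop :=
  exists R (a b : hom R A), isCoequalizer a b e.

Definition isKernelPair {C : Category} {A B P : C} (f : hom A B) (a b : hom P A) : Prop :=
  isPullback f f a b.

Definition isKernel {C : Category} {K B Q : C} (k : hom K B) (q : hom B Q) : Prop :=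
  isZeroMor (q ∘ k) /\
  forall W (w : hom W B), isZeroMor (q ∘ w) ->
    exists u : hom W K, k ∘ u = w /\ forall u' : hom W K, k ∘ u' = w -> u' = u.

Definition isEquivRel {C : Category} {R X : C} (r1 r2 : hom R X) : Prop :=
  (forall W (u v : hom W R), r1 ∘ u = r1 ∘ v -> r2 ∘ u = r2 ∘ v -> u = v) /\
  (exists d : hom X R, r1 ∘ d = idm X /\ r2 ∘ d = idm X) /\
  (exists s : hom R R, r1 ∘ s = r2 /\ r2 ∘ s = r1) /\
  (forall P (p1 p2 : hom P R), isPullback r2 r1 p1 p2 ->
     exists t : hom P R, r1 ∘ t = r1 ∘ p1 /\ r2 ∘ t = r2 ∘ p2).

Definition finitely_complete (C : Category) : Prop :=
  (exists T : C, isTerminal T) /\ has_pullbacks C.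

Definition regular (C : Category) : Prop :=
  finitely_complete C /\
  (forall (A B P : C) (f : hom A B) (a b : hom P A), isKernelPair f a b ->
     exists Q (q : hom A Q), isCoequalizer a b q) /\
  (forall (A B : C) (e : hom A B), isRegularEpi e ->
     forall D (f : hom D B) P (p1 : hom P D) (p2 : hom P A),
       isPullback f e p1 p2 -> isRegularEpi p1).

Definition barr_exact (C : Category) : Prop :=
  regular C /\
  forall (R X : C) (r1 r2 : hom R X), isEquivRel r1 r2 ->
    exists Q (f : hom X Q), isKernelPair f r1 r2.

(* Bourn: pulling back points along any f : E -> B reflects isomorphisms *)
Definition protomodular (C : Category) : Prop :=
  forall (B E : C) (f : hom E B) (A A' : C) (p : hom A B) (s : hom B A)
         (p' : hom A' B) (s' : hom B A') (h : hom A A'),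
    p ∘ s = idm B -> p' ∘ s' = idm B -> p' ∘ h = p -> h ∘ s = s' ->
    forall P (q : hom P E) (g : hom P A), isPullback f p q g ->
    forall P' (q' : hom P' E) (g' : hom P' A'), isPullback f p' q' g' ->
    forall k : hom P P', q' ∘ k = q -> g' ∘ k = h ∘ g -> isIso k -> isIso h.

Definition semi_abelian (C : Category) : Prop :=
  pointed C /\ barr_exact C /\ protomodular C /\ has_binary_coproducts C.

Record EqRel {C : Category} (X : C) := {
  er_ob : C;
  er1 : hom er_ob X;
  er2 : hom er_ob X;
  er_prop : isEquivRel er1 er2 }.

Definition relLe {C : Category} {X : C} (R S : EqRel X) : Prop :=
  exists k : hom (er_ob R) (er_ob S), er1 S ∘ k = er1 R /\ er2 S ∘ k = er2 R.

Definition isMeetRel {C : Category} {X : C} (R S M : EqRel X) : Prop :=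
  relLe M R /\ relLe M S /\ forall T : EqRel X, relLe T R -> relLe T S -> relLe T M.

Definition isJoinRel {C : Category} {X : C} (R S J : EqRel X) : Prop :=
  relLe R J /\ relLe S J /\ forall T : EqRel X, relLe R T -> relLe S T -> relLe J T.

(* distributivity: R /\ (S \/ T) = (R /\ S) \/ (R /\ T) in Eq(X) *)
Definition arithmetical (C : Category) : Prop :=
  forall (X : C) (R S T SjT RmSjT RmS RmT N : EqRel X),
    isJoinRel S T SjT -> isMeetRel R SjT RmSjT ->
    isMeetRel R S RmS -> isMeetRel R T RmT -> isJoinRel RmS RmT N ->
    relLe RmSjT N /\ relLe N RmSjT.

Definition subLe {C : Category} {X Y A : C} (m : hom X A) (n : hom Y A) : Prop :=
  exists k : hom X Y, n ∘ k = m.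

Definition isJoinSub {C : Category} {X Y J A : C} (mX : hom X A) (mY : hom Y A)
    (j : hom J A) : Prop :=
  isMono j /\ subLe mX j /\ subLe mY j /\
  forall B (n : hom B A), isMono n -> subLe mX n -> subLe mY n -> subLe j n.

Definition meetIsZero {C : Category} {X Y A : C} (mX : hom X A) (mY : hom Y A) : Prop :=
  forall P (p1 : hom P X) (p2 : hom P Y), isPullback mX mY p1 p2 -> isZeroObj P.

Definition isNormalSub {C : Category} {X B : C} (m : hom X B) : Prop :=
  exists Q (q : hom B Q), isKernel m q.

Definition huqCommute {C : Category} {X Y A : C} (mX : hom X A) (mY : hom Y A) : Prop :=
  exists P (p1 : hom P X) (p2 : hom P Y), isProduct p1 p2 /\
  exists phi : hom P A,
    (forall u : hom X P, p1 ∘ u = idm X -> isZeroMor (p2 ∘ u) -> phi ∘ u = mX) /\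
    (forall v : hom Y P, isZeroMor (p1 ∘ v) -> p2 ∘ v = idm Y -> phi ∘ v = mY).

(* Main.v *)
Require Import Defs.
From Stdlib Require Import IndefiniteDescription.

Ltac ra := repeat rewrite <- comp_assoc.
Ltac la := repeat rewrite comp_assoc.

Definition ini {C : Category} {Z : C} (HZ : isZeroObj Z) (B : C) : hom Z B :=
  proj1_sig (constructive_indefinite_description _ (proj1 HZ B)).
Definition ter {C : Category} {Z : C} (HZ : isZeroObj Z) (A : C) : hom A Z :=
  proj1_sig (constructive_indefinite_description _ (proj2 HZ A)).

Lemma ini_u {C : Category} {Z : C} (HZ : isZeroObj Z) B (g : hom Z B) : g = ini HZ B.
Proof. unfold ini. destruct (constructive_indefinite_description _ _) as [f Hf]; simpl; auto. Qed.
Lemma ter_u {C : Category} {Z : C} (HZ : isZeroObj Z) A (g : hom A Z) : g = ter HZ A.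
Proof. unfold ter. destruct (constructive_indefinite_description _ _) as [f Hf]; simpl; auto. Qed.

Definition zm {C : Category} {Z : C} (HZ : isZeroObj Z) (A B : C) : hom A B :=
  ini HZ B ∘ ter HZ A.

Lemma zm_l {C : Category} {Z : C} (HZ : isZeroObj Z) A B D (f : hom B D) :
  f ∘ zm HZ A B = zm HZ A D.
Proof. unfold zm. la. rewrite (ini_u HZ _ (f ∘ ini HZ B)). reflexivity. Qed.
Lemma zm_r {C : Category} {Z : C} (HZ : isZeroObj Z) A B D (f : hom A B) :
  zm HZ B D ∘ f = zm HZ A D.
Proof. unfold zm. ra. rewrite (ter_u HZ _ (ter HZ B ∘ f)). reflexivity. Qed.

Lemma zeromor_iff {C : Category} {Z : C} (HZ : isZeroObj Z) A B (f : hom A B) :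
  isZeroMor f <-> f = zm HZ A B.
Proof.
  split.
  - intros [Z' [HZ' [g [h ->]]]].
    assert (E : g = ter HZ' Z ∘ ter HZ A) by (rewrite (ter_u HZ' _ g); symmetry; apply ter_u).
    rewrite E. la. unfold zm. f_equal. apply ini_u.
  - intros ->. exists Z; split; [exact HZ|]. exists (ter HZ A), (ini HZ B). reflexivity.
Qed.

Lemma zeroobj_of {C : Category} {Z : C} (HZ : isZeroObj Z) (P : C) :
  idm P = zm HZ P P -> isZeroObj P.
Proof.
  intro E. split.
  - intro B. exists (zm HZ P B). intro g. rewrite <- (comp_idr g), E. apply zm_l.
  - intro B. exists (zm HZ B P). intro g. rewrite <- (comp_idl g), E. apply zm_r.
Qed.

Lemma zero_id {C : Category} {Z : C} (HZ : isZeroObj Z) (P : C) :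
  isZeroObj P -> idm P = zm HZ P P.
Proof.
  intros [HI HT]. destruct (HI P) as [f Hf]. rewrite (Hf (idm P)), (Hf (zm HZ P P)). reflexivity.
Qed.

Lemma prod_ext {C : Category} {X Y P : C} (p1 : hom P X) (p2 : hom P Y) :
  isProduct p1 p2 -> forall W (a b : hom W P), p1 ∘ a = p1 ∘ b -> p2 ∘ a = p2 ∘ b -> a = b.
Proof.
  intros H W a b E1 E2. destruct (H W (p1 ∘ b) (p2 ∘ b)) as [w [_ U]].
  rewrite (U a E1 E2), (U b eq_refl eq_refl). reflexivity.
Qed.

Lemma pb_ext {C : Category} {X Y Z P : C} (f : hom X Z) (g : hom Y Z) (p1 : hom P X) (p2 : hom P Y) :
  isPullback f g p1 p2 -> forall W (a b : hom W P), p1 ∘ a = p1 ∘ b -> p2 ∘ a = p2 ∘ b -> a = b.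
Proof.
  intros [Hc H] W a b E1 E2. destruct (H W (p1 ∘ b) (p2 ∘ b)) as [w [_ U]].
  { la. rewrite Hc. reflexivity. }
  rewrite (U a E1 E2), (U b eq_refl eq_refl). reflexivity.
Qed.

Lemma prod_exists {C : Category} {Z : C} (HZ : isZeroObj Z) (Hpb : has_pullbacks C) (X Y : C) :
  exists P (p1 : hom P X) (p2 : hom P Y), isProduct p1 p2.
Proof.
  destruct (Hpb X Y Z (ter HZ X) (ter HZ Y)) as [P [p1 [p2 [Hc H]]]].
  exists P, p1, p2. intros W u v. apply H. rewrite (ter_u HZ _ (ter HZ X ∘ u)), (ter_u HZ _ (ter HZ Y ∘ v)). reflexivity.
Qed.

Lemma mono_comp {C : Category} {A B D : C} (f : hom A B) (g : hom B D) :
  isMono f -> isMono g -> isMono (g ∘ f).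
Proof. intros Hf Hg W u v E. apply Hf, Hg. la. exact E. Qed.

Lemma mono_cancel {C : Category} {A B D : C} (f : hom A B) (g : hom B D) :
  isMono (g ∘ f) -> isMono f.
Proof. intros H W u v E. apply H. ra. rewrite E. reflexivity. Qed.

Lemma pb_mono {C : Category} {X Y Z P : C} (f : hom X Z) (g : hom Y Z) (p1 : hom P X) (p2 : hom P Y) :
  isPullback f g p1 p2 -> isMono g -> isMono p1.
Proof.
  intros Hp Hg W u v E. apply (pb_ext _ _ _ _ Hp); auto. apply Hg. la. rewrite <- (proj1 Hp). ra. rewrite E. reflexivity.
Qed.

Lemma iso_mono {C : Category} {A B : C} (f : hom A B) : isIso f -> isMono f.
Proof.
  intros [g [E1 E2]] W u v E. rewrite <- (comp_idl u), <- (comp_idl v), <- E1. ra. rewrite E. reflexivity.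
Qed.

Lemma fromZ {C : Category} {Z : C} (HZ : isZeroObj Z) B (f g : hom Z B) : f = g.
Proof. rewrite (ini_u HZ _ f), (ini_u HZ _ g). reflexivity. Qed.
Lemma toZ {C : Category} {Z : C} (HZ : isZeroObj Z) A (f g : hom A Z) : f = g.
Proof. rewrite (ter_u HZ _ f), (ter_u HZ _ g). reflexivity. Qed.

Lemma pb_from_zero {C : Category} {Z : C} (HZ : isZeroObj Z) {B A K : C} (p : hom A B) (g : hom K A) :
  isMono g -> p ∘ g = zm HZ K B ->
  (forall W (v : hom W A), p ∘ v = zm HZ W B -> exists w, g ∘ w = v) ->
  isPullback (ini HZ B) p (ter HZ K) g.
Proof.
  intros Hm Hc Hu. split.
  - rewrite Hc. reflexivity.
  - intros W u v E. assert (E' : p ∘ v = zm HZ W B).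
    { rewrite <- E. unfold zm. f_equal. apply ter_u. }
    destruct (Hu W v E') as [w Hw]. exists w. split; [split|].
    + rewrite (ter_u HZ _ u). apply ter_u.
    + exact Hw.
    + intros w' _ H2. apply Hm. rewrite H2, Hw. reflexivity.
Qed.

Lemma L1 {C : Category} {Z : C} (HZ : isZeroObj Z) (Hpm : protomodular C)
  {X Y P : C} (p1 : hom P X) (p2 : hom P Y) (Hprod : isProduct p1 p2)
  (i1 : hom X P) (i2 : hom Y P)
  (E11 : p1 ∘ i1 = idm X) (E12 : p2 ∘ i1 = zm HZ X Y)
  (E21 : p1 ∘ i2 = zm HZ Y X) (E22 : p2 ∘ i2 = idm Y)
  N (n : hom N P) (Hn : isMono n) (a : hom X N) (b : hom Y N)
  (Ea : n ∘ a = i1) (Eb : n ∘ b = i2) : isIso n.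
Proof.
  assert (Hi1 : isMono i1).
  { intros W u v E. rewrite <- (comp_idl u), <- (comp_idl v), <- E11. ra. rewrite E. reflexivity. }
  assert (Hker : forall W (v : hom W P), p2 ∘ v = zm HZ W Y -> i1 ∘ (p1 ∘ v) = v).
  { intros W v E. apply (prod_ext p1 p2 Hprod).
    - la. rewrite E11, comp_idl. reflexivity.
    - la. rewrite E12, !zm_r, E. reflexivity. }
  assert (PB1 : isPullback (ini HZ Y) (p2 ∘ n) (ter HZ X) a).
  { apply (pb_from_zero HZ (p2 ∘ n) a).
    + apply (mono_cancel a n). rewrite Ea. exact Hi1.
    + ra. rewrite Ea. exact E12.
    + intros W v E. exists (p1 ∘ (n ∘ v)). apply Hn. rewrite comp_assoc, Ea. apply Hker. la. exact E. }
  assert (PB2 : isPullback (ini HZ Y) p2 (ter HZ X) i1).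
  { apply (pb_from_zero HZ p2 i1); auto.
    intros W v E. exists (p1 ∘ v). apply Hker. exact E. }
  assert (S1 : p2 ∘ n ∘ b = idm Y). { ra. rewrite Eb. exact E22. }
  apply (Hpm Y Z (ini HZ Y) N P (p2 ∘ n) b p2 i2 n S1 E22 eq_refl Eb
           X (ter HZ X) a PB1 X (ter HZ X) i1 PB2 (idm X)).
  - rewrite comp_idr. reflexivity.
  - rewrite comp_idr. symmetry. exact Ea.
  - exists (idm X). split; apply comp_idl.
Qed.

Lemma L2 {C : Category} {Z : C} (HZ : isZeroObj Z) (Hpm : protomodular C) (Hpb : has_pullbacks C)
  {A B : C} (f : hom A B) (H : forall W (w : hom W A), f ∘ w = zm HZ W B -> w = zm HZ W A) :
  isMono f.
Proof.
  destruct (Hpb A A B f f) as [R [r1 [r2 Hp]]].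
  destruct (proj2 Hp A (idm A) (idm A) eq_refl) as [d [[D1 D2] _]].
  assert (PB1 : isPullback (ini HZ A) (idm A) (ter HZ Z) (ini HZ A)).
  { apply pb_from_zero.
      + intros W u v _. rewrite (ter_u HZ _ u), (ter_u HZ _ v). reflexivity.
      + apply (fromZ HZ).
      + intros W v E. exists (ter HZ W). rewrite comp_idl in E. rewrite E. reflexivity. }
  assert (PB2 : isPullback (ini HZ A) r1 (ter HZ Z) (ini HZ R)).
  { apply pb_from_zero.
      + intros W u v _. rewrite (ter_u HZ _ u), (ter_u HZ _ v). reflexivity.
      + apply (fromZ HZ).
      + intros W v E. exists (ter HZ W).
        assert (E2 : r2 ∘ v = zm HZ W A).
        { apply H. la. rewrite <- (proj1 Hp). ra. rewrite E. apply zm_l. }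
        symmetry. apply (pb_ext _ _ _ _ Hp).
        * rewrite E. change (ini HZ R ∘ ter HZ W) with (zm HZ W R). rewrite zm_l. reflexivity.
        * rewrite E2. change (ini HZ R ∘ ter HZ W) with (zm HZ W R). rewrite zm_l. reflexivity. }
  assert (Hd : isIso d).
  { apply (Hpm A Z (ini HZ A) A R (idm A) (idm A) r1 d d (comp_idl _) D1 D1 (comp_idr _)
             Z (ter HZ Z) (ini HZ A) PB1 Z (ter HZ Z) (ini HZ R) PB2 (idm Z)).
    - rewrite comp_idr. reflexivity.
    - apply (fromZ HZ).
    - exists (idm Z). split; apply comp_idl. }
  destruct Hd as [e [He1 He2]].
  assert (R1 : r1 = e). { rewrite <- (comp_idr r1), <- He2. la. rewrite D1. apply comp_idl. }
  assert (R2 : r2 = e). { rewrite <- (comp_idr r2), <- He2. la. rewrite D2. apply comp_idl. }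
  intros W u v E. destruct (proj2 Hp W u v E) as [w [[W1 W2] _]].
  rewrite <- W1, <- W2, R1, R2. reflexivity.
Qed.

Lemma kp_equiv {C : Category} {X B R : C} (f : hom X B) (r1 r2 : hom R X) :
  isPullback f f r1 r2 -> isEquivRel r1 r2.
Proof.
  intros Hp. pose proof (proj1 Hp) as Hc. split; [|split; [|split]].
  - intros W u v E1 E2. apply (pb_ext _ _ _ _ Hp); auto.
  - destruct (proj2 Hp X (idm X) (idm X) eq_refl) as [d [[D1 D2] _]]. exists d. auto.
  - destruct (proj2 Hp R r2 r1 (eq_sym Hc)) as [s [[S1 S2] _]]. exists s. auto.
  - intros P p1 p2 Hq. destruct (proj2 Hp P (r1 ∘ p1) (r2 ∘ p2)) as [t [[T1 T2] _]].
    + la. rewrite Hc. ra. rewrite (proj1 Hq). la. rewrite Hc. reflexivity.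
    + exists t. auto.
Qed.

Definition mkKP {C : Category} {X B R : C} (f : hom X B) (r1 r2 : hom R X)
  (H : isPullback f f r1 r2) : EqRel X :=
  {| er_ob := R; er1 := r1; er2 := r2; er_prop := kp_equiv f r1 r2 H |}.
Arguments mkKP {C X B R f r1 r2} H.

Lemma delta_equiv {C : Category} (X : C) : isEquivRel (idm X) (idm X).
Proof.
  split; [|split; [|split]].
  - intros W u v E1 _. rewrite !comp_idl in E1. exact E1.
  - exists (idm X). split; apply comp_idl.
  - exists (idm X). split; apply comp_idl.
  - intros P p1 p2 Hq. exists p1. split; [reflexivity|]. pose proof (proj1 Hq) as E.
    rewrite !comp_idl in *. exact E.
Qed.

Definition Delta {C : Category} (X : C) : EqRel X :=
  {| er_ob := X; er1 := idm X; er2 := idm X; er_prop := delta_equiv X |}.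

Lemma le_delta {C : Category} {X : C} (U : EqRel X) : relLe (Delta X) U.
Proof.
  destruct (proj1 (proj2 (er_prop U))) as [d [D1 D2]]. exists d. simpl. auto.
Qed.

Lemma le_nabla {C : Category} {Z : C} (HZ : isZeroObj Z) {X N : C} (n1 n2 : hom N X)
  (H : isPullback (ter HZ X) (ter HZ X) n1 n2) (U : EqRel X) : relLe U (mkKP H).
Proof.
  destruct (proj2 H _ (er1 U) (er2 U) (toZ HZ _ _ _)) as [k [[K1 K2] _]].
  exists k. simpl. auto.
Qed.

Lemma meet_delta {C : Category} {X A B RA RB : C} (f : hom X A) (g : hom X B)
  (JM : forall W (a b : hom W X), f ∘ a = f ∘ b -> g ∘ a = g ∘ b -> a = b)
  (r1 r2 : hom RA X) (Hf : isPullback f f r1 r2) (s1 s2 : hom RB X) (Hg : isPullback g g s1 s2) :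
  isMeetRel (mkKP Hf) (mkKP Hg) (Delta X).
Proof.
  split; [apply le_delta|split; [apply le_delta|]].
  intros U [k1 [K1 K2]] [k2 [L1 L2]]. simpl in *.
  assert (E : er1 U = er2 U).
  { apply JM.
    - rewrite <- K1, <- K2. la. rewrite (proj1 Hf). reflexivity.
    - rewrite <- L1, <- L2. la. rewrite (proj1 Hg). reflexivity. }
  exists (er1 U). simpl. rewrite !comp_idl. auto.
Qed.

Lemma join_nabla {C : Category} {Z : C} (HZ : isZeroObj Z) (Hpb : has_pullbacks C)
  {X Y P : C} (p1 : hom P X) (p2 : hom P Y) (Hprod : isProduct p1 p2)
  {S T N : C} (s1 s2 : hom S P) (Hs : isPullback p1 p1 s1 s2)
  (t1 t2 : hom T P) (Ht : isPullback p2 p2 t1 t2)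
  (n1 n2 : hom N P) (Hn : isPullback (ter HZ P) (ter HZ P) n1 n2) :
  isJoinRel (mkKP Hs) (mkKP Ht) (mkKP Hn).
Proof.
  split; [apply le_nabla|split; [apply le_nabla|]].
  intros U [kS [KS1 KS2]] [kT [KT1 KT2]]. simpl in *.
  destruct (Hprod N (p1 ∘ n1) (p2 ∘ n2)) as [w [[W1 W2] _]].
  destruct (proj2 Hs N n1 w (eq_sym W1)) as [a [[A1 A2] _]].
  destruct (proj2 Ht N w n2 W2) as [b [[B1 B2] _]].
  destruct (Hpb _ _ _ (er2 U) (er1 U)) as [Q [q1 [q2 Hq]]].
  destruct (proj2 Hq N (kS ∘ a) (kT ∘ b)) as [m [[M1 M2] _]].
  { la. rewrite KS2, KT1, A2, B1. reflexivity. }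
  destruct (proj2 (proj2 (proj2 (er_prop U))) Q q1 q2 Hq) as [t [T1 T2]].
  exists (t ∘ m). simpl. split.
  - la. rewrite T1. ra. rewrite M1. la. rewrite KS1. exact A1.
  - la. rewrite T2. ra. rewrite M2. la. rewrite KT2. exact B2.
Qed.

Lemma meet_nabla {C : Category} {Z : C} (HZ : isZeroObj Z) {X N : C} (n1 n2 : hom N X)
  (H : isPullback (ter HZ X) (ter HZ X) n1 n2) (R : EqRel X) : isMeetRel R (mkKP H) R.
Proof.
  split; [|split; [apply le_nabla|]].
  - exists (idm _). split; apply comp_idr.
  - intros U HU _. exact HU.
Qed.

Lemma join_delta {C : Category} (X : C) : isJoinRel (Delta X) (Delta X) (Delta X).
Proof. split; [apply le_delta|split; [apply le_delta|]]. intros U _ _. apply le_delta. Qed.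

Lemma prod_swap {C : Category} {X Y P : C} (p1 : hom P X) (p2 : hom P Y) :
  isProduct p1 p2 -> isProduct p2 p1.
Proof.
  intros H W u v. destruct (H W v u) as [w [[W1 W2] U]]. exists w. split; auto.
Qed.

Lemma JM {C : Category} {Z : C} (HZ : isZeroObj Z) (Hpm : protomodular C) (Hpb : has_pullbacks C)
  {X Y P A : C} (p1 : hom P X) (p2 : hom P Y) (Hprod : isProduct p1 p2)
  (i2 : hom Y P) (E21 : p1 ∘ i2 = zm HZ Y X) (E22 : p2 ∘ i2 = idm Y)
  (phi : hom P A) (Hm : isMono (phi ∘ i2)) :
  forall W (a b : hom W P), p1 ∘ a = p1 ∘ b -> phi ∘ a = phi ∘ b -> a = b.
Proof.
  destruct (prod_exists HZ Hpb X A) as [Q [q1 [q2 Hq]]].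
  destruct (Hq P p1 phi) as [g [[G1 G2] _]].
  assert (Hg : isMono g).
  { apply (L2 HZ Hpm Hpb). intros W w E.
    assert (Ew1 : p1 ∘ w = zm HZ W X). { rewrite <- G1. ra. rewrite E. apply zm_l. }
    assert (Ew2 : phi ∘ w = zm HZ W A). { rewrite <- G2. ra. rewrite E. apply zm_l. }
    assert (Ew : w = i2 ∘ (p2 ∘ w)).
    { apply (prod_ext p1 p2 Hprod).
      - la. rewrite E21, !zm_r, Ew1. reflexivity.
      - la. rewrite E22, comp_idl. reflexivity. }
    assert (E0 : p2 ∘ w = zm HZ W Y).
    { apply Hm. rewrite <- comp_assoc, <- Ew, Ew2, <- comp_assoc, !zm_l. reflexivity. }
    rewrite Ew, E0, zm_l. reflexivity. }
  intros W a b E1 E2. apply Hg. apply (prod_ext q1 q2 Hq); la.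
  - rewrite G1. exact E1.
  - rewrite G2. exact E2.
Qed.

Lemma L3 {C : Category} {Z : C} (HZ : isZeroObj Z) (Hpm : protomodular C) (Hpb : has_pullbacks C)
  (Harith : arithmetical C)
  {X Y P A : C} (p1 : hom P X) (p2 : hom P Y) (Hprod : isProduct p1 p2)
  (i1 : hom X P) (i2 : hom Y P)
  (E11 : p1 ∘ i1 = idm X) (E12 : p2 ∘ i1 = zm HZ X Y)
  (E21 : p1 ∘ i2 = zm HZ Y X) (E22 : p2 ∘ i2 = idm Y)
  (phi : hom P A) (Hm1 : isMono (phi ∘ i1)) (Hm2 : isMono (phi ∘ i2)) : isMono phi.
Proof.
  pose proof (JM HZ Hpm Hpb p1 p2 Hprod i2 E21 E22 phi Hm2) as J1.
  pose proof (JM HZ Hpm Hpb p2 p1 (prod_swap p1 p2 Hprod) i1 E12 E11 phi Hm1) as J2.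
  destruct (Hpb _ _ _ phi phi) as [R [r1 [r2 HR]]].
  destruct (Hpb _ _ _ p1 p1) as [S [s1 [s2 HS]]].
  destruct (Hpb _ _ _ p2 p2) as [T [t1 [t2 HT]]].
  destruct (Hpb _ _ _ (ter HZ P) (ter HZ P)) as [N [n1 [n2 HN]]].
  assert (M1 : isMeetRel (mkKP HR) (mkKP HS) (Delta P)).
  { apply meet_delta. intros W a b E1 E2. apply J1; auto. }
  assert (M2 : isMeetRel (mkKP HR) (mkKP HT) (Delta P)).
  { apply meet_delta. intros W a b E1 E2. apply J2; auto. }
  destruct (Harith P (mkKP HR) (mkKP HS) (mkKP HT) (mkKP HN) (mkKP HR) (Delta P) (Delta P) (Delta P)
     (join_nabla HZ Hpb p1 p2 Hprod s1 s2 HS t1 t2 HT n1 n2 HN)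
     (meet_nabla HZ n1 n2 HN _) M1 M2 (join_delta P)) as [[k [K1 K2]] _].
  simpl in *. rewrite comp_idl in K1, K2.
  intros W u v E. destruct (proj2 HR W u v E) as [w [[W1 W2] _]].
  rewrite <- W1, <- W2, <- K1, <- K2. reflexivity.
Qed.

Lemma inj_exists {C : Category} {Z : C} (HZ : isZeroObj Z) {X Y P : C} (p1 : hom P X) (p2 : hom P Y)
  (Hprod : isProduct p1 p2) :
  exists (i1 : hom X P) (i2 : hom Y P),
    p1 ∘ i1 = idm X /\ p2 ∘ i1 = zm HZ X Y /\ p1 ∘ i2 = zm HZ Y X /\ p2 ∘ i2 = idm Y.
Proof.
  destruct (Hprod X (idm X) (zm HZ X Y)) as [i1 [[A1 A2] _]].
  destruct (Hprod Y (zm HZ Y X) (idm Y)) as [i2 [[B1 B2] _]].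
  exists i1, i2. auto.
Qed.

Lemma huq_swap {C : Category} {X Y A : C} (mX : hom X A) (mY : hom Y A) :
  huqCommute mX mY -> huqCommute mY mX.
Proof.
  intros [P [p1 [p2 [Hp [phi [H1 H2]]]]]].
  exists P, p2, p1. split; [apply prod_swap; exact Hp|].
  exists phi. split.
  - intros u E1 E2. apply H2; auto.
  - intros v E1 E2. apply H1; auto.
Qed.

Lemma join_swap {C : Category} {X Y J A : C} (mX : hom X A) (mY : hom Y A) (j : hom J A) :
  isJoinSub mX mY j -> isJoinSub mY mX j.
Proof.
  intros [H1 [H2 [H3 H4]]]. split; [auto|split; [auto|split; [auto|]]].
  intros B n Hn a b. apply H4; auto.
Qed.

Lemma fwd {C : Category} {Z : C} (HZ : isZeroObj Z) (Hpm : protomodular C) (Hpb : has_pullbacks C)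
  (Harith : arithmetical C)
  (A X Y : C) (mX : hom X A) (mY : hom Y A) (HmX : isMono mX) (HmY : isMono mY)
  (J : C) (j : hom J A) (iX : hom X J) (iY : hom Y J)
  (Hjoin : isJoinSub mX mY j) (HiX : j ∘ iX = mX) (HiY : j ∘ iY = mY) :
  huqCommute mX mY -> meetIsZero mX mY /\ isNormalSub iX.
Proof.
  intros [P [p1 [p2 [Hprod [phi [H1 H2]]]]]].
  destruct (inj_exists HZ p1 p2 Hprod) as [i1 [i2 [E11 [E12 [E21 E22]]]]].
  assert (F1 : phi ∘ i1 = mX).
  { apply H1; auto. apply (zeromor_iff HZ). exact E12. }
  assert (F2 : phi ∘ i2 = mY).
  { apply H2; auto. apply (zeromor_iff HZ). exact E21. }
  assert (Hphi : isMono phi).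
  { apply (L3 HZ Hpm Hpb Harith p1 p2 Hprod i1 i2 E11 E12 E21 E22); rewrite ?F1, ?F2; auto. }
  destruct Hjoin as [Hj [_ [_ Hleast]]].
  split.
  - intros Q q1 q2 Hq. apply (zeroobj_of HZ).
    assert (E : i1 ∘ q1 = i2 ∘ q2).
    { apply Hphi. la. rewrite F1, F2. exact (proj1 Hq). }
    assert (Q1 : q1 = zm HZ Q X).
    { rewrite <- (comp_idl q1), <- E11. ra. rewrite E. la. rewrite E21. apply zm_r. }
    assert (Q2 : q2 = zm HZ Q Y).
    { rewrite <- (comp_idl q2), <- E22. ra. rewrite <- E. la. rewrite E12. apply zm_r. }
    apply (pb_ext _ _ _ _ Hq); rewrite comp_idr, zm_l; assumption.
  - destruct (Hpb _ _ _ phi j) as [Nn [n [m Hn]]].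
    assert (Hnm : isMono n) by exact (pb_mono _ _ _ _ Hn Hj).
    destruct (proj2 Hn X i1 iX (eq_trans F1 (eq_sym HiX))) as [a [[Ea _] _]].
    destruct (proj2 Hn Y i2 iY (eq_trans F2 (eq_sym HiY))) as [b [[Eb _] _]].
    destruct (L1 HZ Hpm p1 p2 Hprod i1 i2 E11 E12 E21 E22 Nn n Hnm a b Ea Eb) as [n' [N1 N2]].
    set (h := m ∘ n').
    assert (Hh : j ∘ h = phi).
    { unfold h. la. rewrite <- (proj1 Hn). ra. rewrite N2. apply comp_idr. }
    destruct (Hleast P phi Hphi (ex_intro _ i1 F1) (ex_intro _ i2 F2)) as [g Hg].
    assert (HG1 : h ∘ g = idm J).
    { apply Hj. la. rewrite Hh, Hg, comp_idr. reflexivity. }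
    assert (HG2 : g ∘ h = idm P).
    { apply Hphi. la. rewrite Hg, Hh, comp_idr. reflexivity. }
    assert (Hi : h ∘ i1 = iX).
    { apply Hj. la. rewrite Hh, F1, HiX. reflexivity. }
    assert (HiXm : isMono iX) by (apply (mono_cancel iX j); rewrite HiX; exact HmX).
    exists Y, (p2 ∘ g). split.
    + apply (zeromor_iff HZ). rewrite <- Hi. ra. rewrite (comp_assoc i1 h g), HG2, comp_idl. exact E12.
    + intros W w Hw. apply (zeromor_iff HZ) in Hw.
      exists (p1 ∘ (g ∘ w)). split.
      * assert (E : i1 ∘ (p1 ∘ (g ∘ w)) = g ∘ w).
        { apply (prod_ext p1 p2 Hprod).
          - la. rewrite E11, comp_idl. reflexivity.
          - la. rewrite E12, !zm_r. rewrite <- Hw. la. reflexivity. }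
        rewrite <- Hi. ra. rewrite E. la. rewrite HG1. apply comp_idl.
      * intros u' Hu. apply HiXm. rewrite Hu. rewrite <- Hi. ra.
        assert (E : i1 ∘ (p1 ∘ (g ∘ w)) = g ∘ w).
        { apply (prod_ext p1 p2 Hprod).
          - la. rewrite E11, comp_idl. reflexivity.
          - la. rewrite E12, !zm_r. rewrite <- Hw. la. reflexivity. }
        rewrite E. la. rewrite HG1. symmetry. apply comp_idl.
Qed.

Lemma bwd {C : Category} {Z : C} (HZ : isZeroObj Z) (Hpm : protomodular C) (Hpb : has_pullbacks C)
  (A X Y : C) (mX : hom X A) (mY : hom Y A) (HmX : isMono mX) (HmY : isMono mY)
  (J : C) (j : hom J A) (iX : hom X J) (iY : hom Y J)
  (Hjoin : isJoinSub mX mY j) (HiX : j ∘ iX = mX) (HiY : j ∘ iY = mY) :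
  meetIsZero mX mY -> isNormalSub iX -> isNormalSub iY -> huqCommute mX mY.
Proof.
  intros Hmeet [QX [qX [KX1 KX2]]] [QY [qY [KY1 KY2]]].
  apply (zeromor_iff HZ) in KX1. apply (zeromor_iff HZ) in KY1.
  destruct Hjoin as [Hj _].
  destruct (prod_exists HZ Hpb X Y) as [P [p1 [p2 Hprod]]].
  destruct (prod_exists HZ Hpb QX QY) as [D [d1 [d2 HD]]].
  destruct (inj_exists HZ p1 p2 Hprod) as [i1 [i2 [E11 [E12 [E21 E22]]]]].
  destruct (HD J qX qY) as [e [[De1 De2] _]].
  assert (He : isMono e).
  { apply (L2 HZ Hpm Hpb). intros W w Ew.
    assert (W1 : qX ∘ w = zm HZ W QX). { rewrite <- De1. ra. rewrite Ew. apply zm_l. }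
    assert (W2 : qY ∘ w = zm HZ W QY). { rewrite <- De2. ra. rewrite Ew. apply zm_l. }
    destruct (KX2 W w (proj2 (zeromor_iff HZ _ _ _) W1)) as [a [Ha _]].
    destruct (KY2 W w (proj2 (zeromor_iff HZ _ _ _) W2)) as [b [Hb _]].
    destruct (Hpb _ _ _ mX mY) as [M [m1 [m2 HM]]].
    assert (HMz := Hmeet M m1 m2 HM).
    destruct (proj2 HM W a b) as [c [[C1 _] _]].
    { rewrite <- HiX, <- HiY. ra. rewrite Ha, Hb. reflexivity. }
    assert (Cz : c = zm HZ W M).
    { rewrite <- (comp_idl c), (zero_id HZ M HMz). apply zm_r. }
    rewrite <- Ha, <- C1, Cz, !zm_l. reflexivity. }
  destruct (HD P (qX ∘ iY ∘ p2) (qY ∘ iX ∘ p1)) as [psi [[S1 S2] _]].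
  assert (Ps1 : psi ∘ i1 = e ∘ iX).
  { apply (prod_ext d1 d2 HD); la.
    - rewrite S1, De1, KX1. ra. rewrite E12, !zm_l. reflexivity.
    - rewrite S2, De2. ra. rewrite E11, comp_idr. reflexivity. }
  assert (Ps2 : psi ∘ i2 = e ∘ iY).
  { apply (prod_ext d1 d2 HD); la.
    - rewrite S1, De1. ra. rewrite E22, comp_idr. reflexivity.
    - rewrite S2, De2, KY1. ra. rewrite E21, !zm_l. reflexivity. }
  destruct (Hpb _ _ _ psi e) as [Nn [n [m Hn]]].
  assert (Hnm : isMono n) by exact (pb_mono _ _ _ _ Hn He).
  destruct (proj2 Hn X i1 iX Ps1) as [a [[Ea _] _]].
  destruct (proj2 Hn Y i2 iY Ps2) as [b [[Eb _] _]].
  destruct (L1 HZ Hpm p1 p2 Hprod i1 i2 E11 E12 E21 E22 Nn n Hnm a b Ea Eb) as [n' [N1 N2]].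
  assert (Hk : e ∘ m ∘ n' = psi).
  { rewrite <- (proj1 Hn). ra. rewrite N2. apply comp_idr. }
  exists P, p1, p2. split; [exact Hprod|].
  exists (j ∘ (m ∘ n')). split.
  - intros u U1 U2. apply (zeromor_iff HZ) in U2.
    assert (Hu : u = i1) by (apply (prod_ext p1 p2 Hprod); rewrite ?U1, ?U2, ?E11, ?E12; reflexivity).
    subst u. rewrite <- HiX. ra. f_equal. apply He. la. rewrite Hk. exact Ps1.
  - intros v U1 U2. apply (zeromor_iff HZ) in U1.
    assert (Hv : v = i2) by (apply (prod_ext p1 p2 Hprod); rewrite ?U1, ?U2, ?E21, ?E22; reflexivity).
    subst v. rewrite <- HiY. ra. f_equal. apply He. la. rewrite Hk. exact Ps2.
Qed.

Theorem mainTheorem19 (C : Category) (HC : semi_abelian C) (Harith : arithmetical C)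
  (A X Y : C) (mX : hom X A) (mY : hom Y A) (HmX : isMono mX) (HmY : isMono mY)
  (J : C) (j : hom J A) (iX : hom X J) (iY : hom Y J)
  (Hjoin : isJoinSub mX mY j) (HiX : j ∘ iX = mX) (HiY : j ∘ iY = mY) :
  huqCommute mX mY <-> (meetIsZero mX mY /\ isNormalSub iX /\ isNormalSub iY).
Proof.
  destruct HC as [[Z HZ] [[[[_ Hpb] _] _] [Hpm _]]].
  split.
  - intros H.
    destruct (fwd HZ Hpm Hpb Harith A X Y mX mY HmX HmY J j iX iY Hjoin HiX HiY H) as [H1 H2].
    destruct (fwd HZ Hpm Hpb Harith A Y X mY mX HmY HmX J j iY iX (join_swap _ _ _ Hjoin) HiY HiX
                (huq_swap _ _ H)) as [_ H3].
    auto.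
  - intros [H1 [H2 H3]]. exact (bwd HZ Hpm Hpb A X Y mX mY HmX HmY J j iX iY Hjoin HiX HiY H1 H2 H3).
Qed.
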